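(* Let $G$ be a finite group, $r$ an integer relatively prime to the exponent of $G$, $m\in\mathbb{Z}$, and $g,y\in G$. Then $$|\{x\in G\mid x^m=(gx)^m=y\}|=|\{x\in G\mid x^m=(g^rx)^m=y^r\}|.$$ *)

(* Defs.v *)
From mathcomp Require Import all_boot all_order all_algebra all_fingroup all_solvable.
Set Implicit Arguments. Unset Strict Implicit. Unset Printing Implicit Defensive.

(* Integer power in a finite group: x ^ m for m : int.
   For m = Posz n it is x ^+ n, for m = Negz n (= -(n+1)) it is (x ^+ n.+1)^-1. *)
Definition zexpg (gT : finGroupType) (x : gT) (m : int) : gT :=
  match m with
  | Posz n => (x ^+ n)%g
  | Negz n => (x ^- n.+1)%g
  end.

(* Main.v *)
Require Import Defs.
From mathcomp Require Import all_boot all_order all_algebra all_fingroup all_solvable.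
Set Warnings "-notation-overridden,-ambiguous-paths".
From mathcomp Require Import all_field all_character.
From mathcomp Require Import ring.
Set Implicit Arguments. Unset Strict Implicit. Unset Printing Implicit Defensive.
Import GRing.Theory Num.Theory.

Section Galois.
Variable gT : finGroupType.
Local Open Scope group_scope.
Local Open Scope ring_scope.

Lemma aut_char_expg (H : {group gT}) (chi : 'CF(H)) (nu : {rmorphism algC -> algC})
   (k n : nat) (x : gT) :
  chi \is a character -> x \in H -> (#[x]%g %| n)%N ->
  (forall z : algC, z ^+ n = 1 -> nu z = z ^+ k) ->
  nu (chi x) = chi (x ^+ k)%g.
Proof.
move=> Nchi Hx xn nuP.
have sXH : <[x]>%G \subset H by rewrite cycle_subG.
rewrite -(cfResE chi sXH (cycle_id x)) -(cfResE chi sXH (mem_cycle x k)).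
have [s ->] := char_sum_irr (cfRes_char <[x]>%G Nchi).
rewrite !sum_cfunE rmorph_sum; apply: eq_bigr => i _.
have lin : 'chi_i \is a linear_char by apply: irr_cyclic_lin; exact: cycle_cyclic.
rewrite lin_charX ?cycle_id //; apply: nuP.
rewrite -lin_charX ?cycle_id //.
have -> : (x ^+ n = 1)%g by apply/eqP; rewrite -order_dvdn.
exact: lin_char1.
Qed.

Definition cpairs (A B : {set gT}) (z : gT) :=
  [set p : gT * gT | (p.1 \in A) && (p.2 \in B) && (p.1 * p.2 == z)%g].

Lemma cpairsE (A B : {set gT}) z :
  (#|cpairs A B z|)%:R = \sum_(x in A) \sum_(y in B) ((x * y == z)%g)%:R :> algC.
Proof.
rewrite pair_big /= -sum1_card natr_sum [RHS]big_mkcond [LHS]big_mkcond /=.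
apply: eq_bigr => -[x y] _ /=; rewrite inE /=.
by case: (x \in A); case: (y \in B); case: (x * y == z)%g.
Qed.

Lemma class_formula (H : {group gT}) a b z : a \in H -> b \in H -> z \in H ->
  (#|cpairs (a ^: H) (b ^: H) z|)%:R =
  (#|a ^: H| * #|b ^: H|)%:R / #|H|%:R *
   \sum_i 'chi[H]_i a * 'chi_i b * ('chi_i z)^* / 'chi_i 1%g.
Proof.
move=> Ha Hb Hz.
pose j1 := enum_rank_in (classes1 H) (a ^: H).
pose j2 := enum_rank_in (classes1 H) (b ^: H).
pose j3 := enum_rank_in (classes1 H) (z ^: H).
have E1 : enum_val j1 = a ^: H by rewrite enum_rankK_in ?mem_classes.
have E2 : enum_val j2 = b ^: H by rewrite enum_rankK_in ?mem_classes.
have E3 : enum_val j3 = z ^: H by rewrite enum_rankK_in ?mem_classes.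
have := @gring_classM_coef_sum_eq gT H j1 j2 j3 a b z.
rewrite E1 E2 E3 !class_refl => /(_ isT isT isT) <-.
rewrite (@set_gring_classM_coef _ _ _ _ _ z) ?E3 ?class_refl //.
rewrite E1 E2; congr (_ %:R); apply: eq_card => -[x y].
by rewrite !inE.
Qed.

Lemma avg_class (H : {group gT}) (A : {set gT}) (F : gT -> algC) :
  (forall a h, a \in A -> h \in H -> (a ^ h)%g \in A) ->
  \sum_(a in A) (#|a ^: H|%:R)^-1 * \sum_(x in a ^: H) F x = \sum_(x in A) F x.
Proof.
move=> cA.
have dir a x : a \in A -> x \in a ^: H -> (x \in A) && (a \in x ^: H).
  move=> aA /imsetP[h hH ->]; rewrite cA //=.
  by apply/imsetP; exists (h^-1)%g; rewrite ?groupV // conjgK.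
transitivity (\sum_(a in A) \sum_(x in a ^: H) (#|x ^: H|%:R)^-1 * F x).
  apply: eq_bigr => a aA; rewrite mulr_sumr; apply: eq_bigr => x xa.
  by rewrite (class_eqP xa).
rewrite (exchange_big_dep (fun x => x \in A)) /=; last first.
  by move=> a x aA xa; case/andP: (dir a x aA xa).
apply: eq_bigr => x xA.
rewrite (eq_bigl (fun a => a \in x ^: H)); last first.
  move=> a; apply/andP/idP => [[aA xa]|ax].
    by case/andP: (dir a x aA xa).
  by case/andP: (dir x a xA ax).
rewrite sumr_const -[_ *+ _]mulr_natl mulrA mulfV ?mul1r //.
by rewrite pnatr_eq0 -lt0n (cardD1 x) class_refl.
Qed.

Lemma card_class_neq0 (H : {group gT}) x : (#|x ^: H|%:R : algC) != 0.
Proof. by rewrite pnatr_eq0 -lt0n (cardD1 x) class_refl. Qed.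

Lemma set_formula (H : {group gT}) (A B : {set gT}) z :
  A \subset H -> B \subset H ->
  (forall a h, a \in A -> h \in H -> (a ^ h)%g \in A) ->
  (forall a h, a \in B -> h \in H -> (a ^ h)%g \in B) -> z \in H ->
  (#|cpairs A B z|)%:R = \sum_(a in A) \sum_(b in B) ((#|H|%:R)^-1 *
     \sum_i 'chi[H]_i a * 'chi_i b * ('chi_i z)^* / 'chi_i 1%g).
Proof.
move=> sAH sBH cA cB Hz.
rewrite cpairsE -(@avg_class H A (fun x => \sum_(y in B) ((x * y == z)%g)%:R) cA).
apply: eq_bigr => a aA.
under eq_bigr => x xa do rewrite -(@avg_class H B (fun y => ((x * y == z)%g)%:R) cB).
rewrite exchange_big /= mulr_sumr; apply: eq_bigr => b bB.
rewrite -mulr_sumr -cpairsE (class_formula (subsetP sAH a aA) (subsetP sBH b bB) Hz).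
have := card_class_neq0 H a; have := card_class_neq0 H b.
have : (#|H|%:R : algC) != 0 by rewrite pnatr_eq0 -lt0n cardG_gt0.
rewrite natrM; move: (#|H|%:R) (#|a ^: H|%:R) (#|b ^: H|%:R) => h u v hn vn un.
by field; rewrite hn un vn.
Qed.

Lemma cpairs_out (H : {group gT}) (A B : {set gT}) z :
  A \subset H -> B \subset H -> z \notin H -> #|cpairs A B z| = 0%N.
Proof.
move=> sAH sBH zH; apply/eqP; rewrite cards_eq0; apply/eqP/setP => -[x y].
rewrite !inE /=; apply/negbTE; apply/negP => /andP[/andP[xA yB] /eqP xy].
move/negP: zH; apply; by rewrite -xy groupM //; [apply: (subsetP sAH) | apply: (subsetP sBH)].
Qed.

Lemma galois_pairs (H : {group gT}) (A B : {set gT}) z k k' :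
  A \subset H -> B \subset H ->
  (forall a h, a \in A -> h \in H -> (a ^ h)%g \in A) ->
  (forall a h, a \in B -> h \in H -> (a ^ h)%g \in B) ->
  coprime k (exponent [set: gT]) ->
  (forall x : gT, (x ^+ k) ^+ k' = x)%g ->
  #|cpairs A B z| =
  #|cpairs [set (a ^+ k)%g | a in A] [set (b ^+ k)%g | b in B] (z ^+ k)%g|.
Proof.
move=> sAH sBH cA cB hk kK.
have inj : injective (fun x : gT => x ^+ k)%g by apply: (@can_inj _ _ _ (fun x : gT => (x ^+ k')%g) kK).
have sAkH : [set (a ^+ k)%g | a in A] \subset H.
  by apply/subsetP => _ /imsetP[a aA ->]; rewrite groupX ?(subsetP sAH).
have sBkH : [set (a ^+ k)%g | a in B] \subset H.
  by apply/subsetP => _ /imsetP[a aA ->]; rewrite groupX ?(subsetP sBH).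
have clos (C : {set gT}) : (forall a h, a \in C -> h \in H -> (a ^ h)%g \in C) ->
    forall a h, a \in [set (a ^+ k)%g | a in C] -> h \in H ->
     (a ^ h)%g \in [set (a ^+ k)%g | a in C].
  move=> cC _ h /imsetP[a aC ->] hH; rewrite conjXg.
  by apply/imsetP; exists (a ^ h)%g; rewrite ?cC.
have [Hz | Hz] := boolP (z \in H); last first.
  rewrite (cpairs_out sAH sBH Hz) (cpairs_out sAkH sBkH) //; apply: contra Hz => Hzk.
  by rewrite -(kK z) groupX.
have [nu nuP] := Qn_aut_exists hk.
apply/eqP; rewrite -(eqr_nat algC); apply/eqP.
rewrite -[LHS](rmorph_nat nu) (set_formula sAH sBH cA cB Hz) (set_formula sAkH sBkH (clos _ cA) (clos _ cB)) ?groupX //.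
rewrite big_imset /=; last by move=> ? ? _ _; apply: inj.
rewrite rmorph_sum; apply: eq_bigr => a aA.
rewrite big_imset /=; last by move=> ? ? _ _; apply: inj.
rewrite rmorph_sum; apply: eq_bigr => b bB.
have Ha := subsetP sAH a aA; have Hb := subsetP sBH b bB.
have ex (x : gT) : (#[x]%g %| exponent [set: gT])%N by exact: dvdn_exponent (in_setT x).
rewrite rmorphM fmorphV rmorph_nat rmorph_sum; congr (_ * _); apply: eq_bigr => i _.
rewrite rmorphM fmorphV !rmorphM -conjC_irrAut.
by rewrite !(aut_char_expg (irr_char i) _ (ex _) nuP) ?group1 // expg1n.
Qed.

Local Open Scope group_scope.

Notation Sroot m w := [set a : gT | a ^+ m == w].

Lemma Lset_cpairs (m : nat) (g y : gT) :
  #|[set x : gT | (x ^+ m == y) && ((g * x) ^+ m == y)]| =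
  #|cpairs (Sroot m y) (Sroot m y^-1) g|.
Proof.
pose f (x : gT) := (g * x, x^-1).
have finj : injective f by move=> x1 x2 [_ /invg_inj].
rewrite -(card_imset _ finj); apply: eq_card => -[a b].
rewrite /cpairs; apply/imsetP/idP => [[x] | ].
  rewrite !inE /f => /andP[/eqP xm /eqP gxm] [-> ->] /=.
  by rewrite gxm expVgn xm mulgK !eqxx.
rewrite !inE /= => /andP[/andP[/eqP am /eqP bm] /eqP abg].
exists b^-1; last by rewrite /f invgK -abg mulgK.
by rewrite !inE -abg mulgK am expVgn bm invgK !eqxx.
Qed.

Lemma conj_fix (w h : gT) : h \in 'C[w] -> w ^ h = w.
Proof. by move/cent1P=> cwh; rewrite conjgE -cwh mulKg. Qed.

Lemma main_nat (m k k' : nat) (g y : gT) :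
  coprime k (exponent [set: gT]) -> (forall x : gT, (x ^+ k) ^+ k' = x) ->
  #|[set x : gT | (x ^+ m == y) && ((g * x) ^+ m == y)]| =
  #|[set x : gT | (x ^+ m == y ^+ k) && ((g ^+ k * x) ^+ m == y ^+ k)]|.
Proof.
move=> hk kK.
have kK' (x : gT) : (x ^+ k') ^+ k = x by rewrite expgnAC kK.
have CinvS (b : gT) : 'C[b^-1] = 'C[b].
  by apply/setP => a; rewrite !(cent1C a) groupV.
have Ssub w : Sroot m w \subset 'C[w].
  apply/subsetP => a; rewrite inE => /eqP <-.
  by rewrite cent1C groupX ?cent1id.
have Scl w : forall a h, a \in Sroot m w -> h \in 'C[w] -> a ^ h \in Sroot m w.
  move=> a h; rewrite inE => /eqP am hw; rewrite inE.
  by rewrite -conjXg am conj_fix ?eqxx.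
have Simg w : [set a ^+ k | a in Sroot m w] = Sroot m (w ^+ k).
  apply/setP => a; rewrite [RHS]inE; apply/imsetP/eqP => [[b] | am].
    by rewrite inE => /eqP bm ->; rewrite expgnAC bm.
  by exists (a ^+ k'); rewrite ?kK' // inE expgnAC am kK.
rewrite !Lset_cpairs.
have sub2 : Sroot m y^-1 \subset 'C[y] by rewrite -CinvS Ssub.
have cl2 : forall a h, a \in Sroot m y^-1 -> h \in 'C[y] -> a ^ h \in Sroot m y^-1.
  by move=> a h aS; rewrite -CinvS; apply: Scl.
rewrite (@galois_pairs 'C[y]%G _ _ g k k' (Ssub y) sub2 (@Scl y) cl2 hk kK).
by rewrite !Simg expVgn.
Qed.

Lemma pow_inv_exists (k : nat) : coprime k (exponent [set: gT]) ->
  exists k' : nat, forall x : gT, (x ^+ k) ^+ k' = x.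
Proof.
set e := exponent _ => hk.
have xe (x : gT) : x ^+ e = 1 by apply: expg_exponent; rewrite inE.
case: (posnP k) => [k0 | kpos].
  move: hk; rewrite k0 /coprime gcd0n => /eqP e1.
  by exists 0%N => x; rewrite -[x]expg1 -e1 xe expg1n.
case: (egcdnP e kpos) => km kn Dk _.
exists km => x; rewrite -expgnA mulnC Dk (eqP hk) expgnDr mulnC expgnA xe.
by rewrite expg1n mul1g expg1.
Qed.

Definition nexp (r : int) : nat :=
  match r with Posz n => n | Negz n => (n.+1 * (exponent [set: gT]).-1)%N end.

Lemma zexpgE (x : gT) (r : int) : zexpg x r = x ^+ nexp r.
Proof.
case: r => [n | n] //=.
set e := exponent _.
have xe : x ^+ e = 1 by apply: expg_exponent; rewrite inE.
have epos : (0 < e)%N by apply: exponent_gt0.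
apply/eqP; rewrite eq_invg_mul -expgnDr -mulnS prednK // mulnC expgnA xe.
by rewrite expg1n.
Qed.

Lemma nexp_coprime (r : int) :
  coprime `|r|%N (exponent [set: gT]) -> coprime (nexp r) (exponent [set: gT]).
Proof.
case: r => [n | n] //= h.
rewrite coprimeMl h /=.
have epos : (0 < exponent [set: gT])%N by apply: exponent_gt0.
by rewrite -{2}(prednK epos) coprimenS.
Qed.

End Galois.

Theorem corollary5p5 (gT : finGroupType) (r m : int) (g y : gT)
  (hr : coprime `|r|%N (exponent [set: gT])) :
  #|[set x : gT | (zexpg x m == y) && (zexpg (g * x)%g m == y)]| =
  #|[set x : gT | (zexpg x m == zexpg y r)
                 && (zexpg (zexpg g r * x)%g m == zexpg y r)]|.
Proof.
have hk := nexp_coprime hr.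
have [k' kK] := pow_inv_exists hk.
have -> : [set x : gT | (zexpg x m == y) && (zexpg (g * x)%g m == y)] =
   [set x : gT | (x ^+ nexp gT m == y)%g && ((g * x) ^+ nexp gT m == y)%g].
  by apply/setP => x; rewrite !inE !zexpgE.
have -> : [set x : gT | (zexpg x m == zexpg y r)
                 && (zexpg (zexpg g r * x)%g m == zexpg y r)] =
   [set x : gT | (x ^+ nexp gT m == y ^+ nexp gT r)%g
       && ((g ^+ nexp gT r * x) ^+ nexp gT m == y ^+ nexp gT r)%g].
  by apply/setP => x; rewrite !inE !zexpgE.
exact: main_nat hk kK.
Qed.
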